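(* Let $n\ge 1$, let $G\in\mathcal{G}_{2n}$, and let $M_s$ be a perfect matching of $G$ with $f(G,M_s)=n-1$. Then for every perfect matching $M$ of $G$, $M_s$ can be obtained from $M$ by a finite sequence of matching 2-switches (possibly empty).
   Context: All graphs are finite and simple. $\mathcal{G}_{2n}$ denotes the set of all graphs with $2n$ vertices that have a perfect matching. For a perfect matching $M$ of $G$, a forcing set of $M$ is a subset $S\subseteq M$ contained in no other perfect matching of $G$; $f(G,M)$ is the minimum size of a forcing set of $M$. A cycle is $M$-alternating if its edges alternate between $M$ and $E(G)\setminus M$. If $C$ is an $M$-alternating cycle of length $4$, the perfect matching $M\oplus E(C)=(M\setminus E(C))\cup(E(C)\setminus M)$ is said to be obtained from $M$ by a matching 2-switch. *)

(* Defs.v *)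
From mathcomp Require Import all_boot.
From Stdlib Require Import Relation_Operators.
Set Implicit Arguments. Unset Strict Implicit. Unset Printing Implicit Defensive.

(* A finite simple graph: vertex type T (finType), adjacency e : rel T,
   assumed symmetric and irreflexive in the theorem.  Edges are the
   2-element vertex sets {x,y} with e x y. *)
Section Matchings.
Variables (T : finType) (e : rel T).

Definition is_edge (S : {set T}) : bool :=
  [exists x, exists y, e x y && (S == [set x; y])].

Definition perfect_matching (M : {set {set T}}) : bool :=
  [forall S in M, is_edge S] &&
  [forall v, #|[set S in M | v \in S]| == 1].

Definition forcing_setb (M S : {set {set T}}) : bool :=
  (S \subset M) &&
  [forall M' : {set {set T}}, (perfect_matching M' && (S \subset M')) ==> (M' == M)].

(* f(G,M): minimum size of a forcing set of M (M itself is a forcing set). *)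
Definition forcing_number (M : {set {set T}}) : nat :=
  \big[minn/#|M|]_(S in powerset M | forcing_setb M S) #|S|.

Definition two_switch (M M' : {set {set T}}) : Prop :=
  exists a b c d : T,
    [/\ uniq [:: a; b; c; d],
        e a b && e b c && e c d && e d a,
        ([set a; b] \in M) && ([set c; d] \in M),
        ([set b; c] \notin M) && ([set d; a] \notin M) &
        M' = ((M :\ [set a; b]) :\ [set c; d]) :|: [set [set b; c]; [set d; a]]].

End Matchings.

(* Main.v *)
Require Import Defs.
From mathcomp Require Import all_boot.
From Stdlib Require Import Relation_Operators.
Set Implicit Arguments. Unset Strict Implicit. Unset Printing Implicit Defensive.

Lemma bigmin_le_j (I : finType) (P : pred I) (F : I -> nat) x j :
  P j -> \big[minn/x]_(i | P i) F i <= F j.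
Proof.
move=> Pj; rewrite unlock.
have : j \in index_enum I by rewrite mem_index_enum.
elim: (index_enum I) => //= i s IH; rewrite inE => /orP [/eqP <-|js].
  by rewrite Pj geq_minl.
case: (P i); last exact: IH.
by apply: leq_trans (geq_minr _ _) (IH js).
Qed.

Section G.
Variables (T : finType) (e : rel T).
Hypothesis e_sym : symmetric e.
Hypothesis e_irr : irreflexive e.

Lemma pm_edge (M : {set {set T}}) S : perfect_matching e M -> S \in M ->
  exists x y, e x y /\ S = [set x; y].
Proof.
case/andP=> /forallP H _ SM; move: (H S); rewrite SM /= => /existsP [x /existsP [y /andP [exy /eqP ->]]].
by exists x, y.
Qed.

Lemma pm_uniq (M : {set {set T}}) v S1 S2 : perfect_matching e M -> S1 \in M -> S2 \in M ->
  v \in S1 -> v \in S2 -> S1 = S2.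
Proof.
case/andP=> _ /forallP /(_ v) /cards1P [S0 H] h1 h2 v1 v2.
have: S1 \in [set S in M | v \in S] by rewrite inE h1 v1.
have: S2 \in [set S in M | v \in S] by rewrite inE h2 v2.
by rewrite H !inE => /eqP -> /eqP ->.
Qed.

Lemma pm_cover (M : {set {set T}}) v : perfect_matching e M -> exists2 S, S \in M & v \in S.
Proof.
case/andP=> _ /forallP /(_ v) /cards1P [S0 H].
have: S0 \in [set S in M | v \in S] by rewrite H inE.
by rewrite inE => /andP [h1 h2]; exists S0.
Qed.

Lemma pm_intro (M : {set {set T}}) : (forall S, S \in M -> exists x y, e x y /\ S = [set x; y]) ->
  (forall v, exists2 S, S \in M & v \in S) ->
  (forall v S1 S2, S1 \in M -> S2 \in M -> v \in S1 -> v \in S2 -> S1 = S2) ->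
  perfect_matching e M.
Proof.
move=> He Hc Hu; apply/andP; split.
  apply/forallP => S; apply/implyP => /He [x [y [exy ->]]].
  by apply/existsP; exists x; apply/existsP; exists y; rewrite exy eqxx.
apply/forallP => v; apply/cards1P; case: (Hc v) => S0 h0 v0; exists S0.
apply/setP => S; rewrite !inE; apply/andP/eqP => [[h1 h2]|->]; last by [].
exact: Hu h1 h0 h2 v0.
Qed.


Definition pM (M : {set {set T}}) v := odflt v [pick w | [set v; w] \in M].

Lemma pair_in_neq (M : {set {set T}}) v w : perfect_matching e M ->
  [set v; w] \in M -> v != w.
Proof.
move=> pm /(pm_edge pm) [x [y [exy H]]]; apply/negP => /eqP vw; subst w.
have hx : x \in [set v; v] by rewrite H !inE eqxx.
have hy : y \in [set v; v] by rewrite H !inE eqxx orbT.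
move: hx hy; rewrite !inE !orbb => /eqP hx /eqP hy.
by rewrite hx hy e_irr in exy.
Qed.

Section PM.
Variables (M : {set {set T}}).
Hypothesis pm : perfect_matching e M.

Lemma pM_in v : [set v; pM M v] \in M.
Proof.
rewrite /pM; case: pickP => [w //|H] /=.
case: (pm_cover v pm) => S SM vS; case: (pm_edge pm SM) => [x [y [exy HS]]].
move: vS; rewrite HS !inE => /orP [/eqP vx|/eqP vy].
  by move: (H y); rewrite vx -HS SM.
by move: (H x); rewrite vy setUC -HS SM.
Qed.

Lemma pM_uniq v w : [set v; w] \in M -> pM M v = w.
Proof.
move=> H; have v1 : v \in [set v; w] by rewrite !inE eqxx.
have v2 : v \in [set v; pM M v] by rewrite !inE eqxx.
have E := pm_uniq pm H (pM_in v) v1 v2. have : w \in [set v; pM M v] by rewrite -E !inE eqxx orbT.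
rewrite !inE => /orP [/eqP wv|/eqP //]; subst w.
by move: (pair_in_neq pm H); rewrite eqxx.
Qed.

Lemma pM_neq v : pM M v != v.
Proof. by rewrite eq_sym; apply: pair_in_neq pm (pM_in v). Qed.

Lemma pM_inv v : pM M (pM M v) = v.
Proof. by apply: pM_uniq; rewrite setUC pM_in. Qed.

Lemma pM_edge v : e v (pM M v).
Proof.
case: (pm_edge pm (pM_in v)) => x [y [exy H]].
have: v \in [set x; y] by rewrite -H !inE eqxx.
have: pM M v \in [set x; y] by rewrite -H !inE eqxx orbT.
rewrite !inE => /orP [/eqP a|/eqP a] /orP [/eqP b|/eqP b].
- by move: (pM_neq v); rewrite a b eqxx.
- by rewrite a b e_sym.
- by rewrite a b.
- by move: (pM_neq v); rewrite a b eqxx.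
Qed.

Lemma pm_mem S : S \in M -> exists v, S = [set v; pM M v].
Proof.
move=> SM; case: (pm_edge pm SM) => x [y [exy H]]; exists x.
by rewrite (@pM_uniq x y) // -H.
Qed.

End PM.

Lemma pm_eq (M N : {set {set T}}) : perfect_matching e M -> perfect_matching e N ->
  (forall v, pM M v = pM N v) -> M = N.
Proof.
move=> pmM pmN H; apply/setP => S; apply/idP/idP => SX.
  by case: (pm_mem pmM SX) => v ->; rewrite H pM_in.
by case: (pm_mem pmN SX) => v ->; rewrite -H pM_in.
Qed.


Definition swp (M : {set {set T}}) a c :=
  ((M :\ [set a; pM M a]) :\ [set c; pM M c]) :|:
    [set [set pM M a; c]; [set pM M c; a]].

Definition fsw (M : {set {set T}}) a c v :=
  if v == a then pM M c else if v == pM M a then c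
  else if v == c then pM M a else if v == pM M c then a else pM M v.

Section SW.
Variables (M : {set {set T}}) (a c : T).
Hypothesis pm : perfect_matching e M.
Hypothesis ca : c != a.
Hypothesis cb : c != pM M a.
Hypothesis ebc : e (pM M a) c.
Hypothesis eda : e (pM M c) a.

Local Notation b := (pM M a).
Local Notation d := (pM M c).

Lemma sw_ab : a != b. Proof. by rewrite eq_sym pM_neq. Qed.
Lemma sw_cd : c != d. Proof. by rewrite eq_sym pM_neq. Qed.
Lemma sw_ad : a != d.
Proof. apply/eqP => E; move/eqP: cb; apply; by rewrite E pM_inv. Qed.
Lemma sw_bd : b != d.
Proof. apply/eqP => E; move/eqP: ca; apply; by rewrite -(pM_inv pm c) -E pM_inv. Qed.

Lemma old_disj S x : S \in M -> S != [set a; b] -> S != [set c; d] -> x \in S ->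
  [&& x != a, x != b, x != c & x != d].
Proof.
move=> SM n1 n2 xS.
have K : forall y, y \in S -> S = [set y; pM M y].
  by move=> y yS; apply: (pm_uniq pm SM (pM_in pm y) yS); rewrite !inE eqxx.
apply/and4P; split; apply/eqP => E; subst x.
- by move: n1; rewrite (K _ xS) eqxx.
- by move: n1; rewrite (K _ xS) pM_inv // setUC eqxx.
- by move: n2; rewrite (K _ xS) eqxx.
- by move: n2; rewrite (K _ xS) pM_inv // setUC eqxx.
Qed.

Lemma in_swp S : (S \in swp M a c) =
  [|| (S \in M) && (S != [set a; b]) && (S != [set c; d]), S == [set b; c] | S == [set d; a]].
Proof. by rewrite !inE; case: (S \in M); case: (S == _); case: (S == _). Qed.

Lemma swp_pm : perfect_matching e (swp M a c).
Proof.
have dis := (sw_ab, sw_cd, sw_ad, sw_bd).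
apply: pm_intro.
- move=> S; rewrite in_swp => /or3P [/andP [/andP [SM _] _]|/eqP ->|/eqP ->].
  + exact: pm_edge pm SM.
  + by exists b, c.
  + by exists d, a.
- move=> v.
  case va: (v == a); first by exists [set d; a]; rewrite ?in_swp ?eqxx ?orbT // (eqP va) !inE eqxx orbT.
  case vb: (v == b); first by exists [set b; c]; rewrite ?in_swp ?eqxx ?orbT // (eqP vb) !inE eqxx.
  case vc: (v == c); first by exists [set b; c]; rewrite ?in_swp ?eqxx ?orbT // (eqP vc) !inE eqxx orbT.
  case vd: (v == d); first by exists [set d; a]; rewrite ?in_swp ?eqxx ?orbT // (eqP vd) !inE eqxx.
  exists [set v; pM M v]; last by rewrite !inE eqxx.
  rewrite in_swp pM_in //=; apply/orP; left; apply/andP; split; apply/eqP => E.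
    have : v \in [set a; b] by rewrite -E !inE eqxx.
    by rewrite !inE va vb.
  have : v \in [set c; d] by rewrite -E !inE eqxx.
  by rewrite !inE vc vd.
- move=> v S1 S2; rewrite !in_swp.
  have oldn : forall S, (S \in M) && (S != [set a; b]) && (S != [set c; d]) ->
      v \in S -> v \in [set b; c] -> False.
    move=> S /andP [/andP [SM n1] n2] vS; case/and4P: (old_disj SM n1 n2 vS) => h1 h2 h3 h4.
    by rewrite !inE (negbTE h2) (negbTE h3).
  have oldn' : forall S, (S \in M) && (S != [set a; b]) && (S != [set c; d]) ->
      v \in S -> v \in [set d; a] -> False.
    move=> S /andP [/andP [SM n1] n2] vS; case/and4P: (old_disj SM n1 n2 vS) => h1 h2 h3 h4.
    by rewrite !inE (negbTE h1) (negbTE h4).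
  have newn : v \in [set b; c] -> v \in [set d; a] -> False.
    rewrite !inE => /orP [/eqP->|/eqP->] /orP [/eqP E|/eqP E].
    - by move: sw_bd; rewrite E eqxx.
    - by move: sw_ab; rewrite E eqxx.
    - by move: sw_cd; rewrite {1}E eqxx.
    - by move: ca; rewrite E eqxx.
  case/or3P => [h1|/eqP->|/eqP->]; case/or3P => [h2|/eqP->|/eqP->] => v1 v2 //;
    try by [case: (oldn _ h1 v1 v2) | case: (oldn' _ h1 v1 v2) | case: (oldn _ h2 v2 v1)
           | case: (oldn' _ h2 v2 v1) | case: (newn v1 v2) | case: (newn v2 v1)].
  move: h1 h2 => /andP [/andP [h1 _] _] /andP [/andP [h2 _] _].
  exact: pm_uniq pm h1 h2 v1 v2.
Qed.

Lemma swp_pM v : pM (swp M a c) v = fsw M a c v.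
Proof.
have pm' := swp_pm.
apply: (pM_uniq pm'); rewrite /fsw.
case: eqP => [->|va]; first by rewrite in_swp setUC eqxx !orbT.
case: eqP => [->|vb]; first by rewrite in_swp eqxx !orbT.
case: eqP => [->|vc]; first by rewrite in_swp setUC eqxx !orbT.
case: eqP => [->|vd]; first by rewrite in_swp eqxx !orbT.
rewrite in_swp pM_in //=; apply/orP; left; apply/andP; split; apply/eqP => E.
  have : v \in [set a; b] by rewrite -E !inE eqxx.
  by rewrite !inE => /orP [/eqP|/eqP].
have : v \in [set c; d] by rewrite -E !inE eqxx.
by rewrite !inE => /orP [/eqP|/eqP].
Qed.

Lemma swp_two : two_switch e M (swp M a c).
Proof.
exists a, b, c, d; split.
- rewrite /= !inE !negb_or sw_ab sw_ad sw_bd eq_sym ca eq_sym cb sw_cd //.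
- by rewrite (pM_edge pm a) ebc (pM_edge pm c) eda.
- by rewrite !pM_in.
- apply/andP; split; apply/negP => H.
    by move: (pM_uniq pm H); rewrite pM_inv // => E; move: ca; rewrite E eqxx.
  by move: (pM_uniq pm H); rewrite pM_inv // => E; move: ca; rewrite E eqxx.
- by [].
Qed.

End SW.


Lemma fsw_a M a c : fsw M a c a = pM M c.
Proof. by rewrite /fsw eqxx. Qed.
Lemma fsw_b M a c : perfect_matching e M -> fsw M a c (pM M a) = c.
Proof. by move=> pm; rewrite /fsw (negbTE (pM_neq pm a)) eqxx. Qed.
Lemma fsw_o M a c v : v != a -> v != pM M a -> v != c -> v != pM M c ->
  fsw M a c v = pM M v.
Proof. by move=> h1 h2 h3 h4; rewrite /fsw (negbTE h1) (negbTE h2) (negbTE h3) (negbTE h4). Qed.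

Section Target.
Variable Ms : {set {set T}}.
Hypothesis pmS : perfect_matching e Ms.
Local Notation s := (pM Ms).

Definition crt := clos_refl_trans _ (two_switch e).

Definition Good M := exists M2, [/\ perfect_matching e M2, crt M M2,
  (forall v, pM M v = s v -> pM M2 v = s v) &
  exists t, pM M t != s t /\ pM M2 t = s t].

Lemma improve M a : perfect_matching e M -> s (pM M a) != a ->
  e (pM M (s (pM M a))) a ->
  exists M2, [/\ perfect_matching e M2, two_switch e M M2,
    (forall v, pM M v = s v -> pM M2 v = s v) & pM M2 (pM M a) = s (pM M a)].
Proof.
move=> pm ca eda.
have cb : s (pM M a) != pM M a by apply: pM_neq.
have ebc : e (pM M a) (s (pM M a)) by apply: pM_edge.
exists (swp M a (s (pM M a))); split.
- exact: swp_pm.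
- exact: swp_two.
- move=> v hv; rewrite swp_pM //.
  have bd := sw_bd pm ca.
  rewrite fsw_o //; apply/eqP => E; subst v.
  + by move: ca; rewrite hv pM_inv // eqxx.
  + by move: hv; rewrite pM_inv // => E; move: ca; rewrite -E eqxx.
  + by move: hv; rewrite pM_inv // => E; move: bd; rewrite E eqxx.
  + move: hv; rewrite pM_inv // => E.
    have F : pM M (s (pM M a)) = pM M a.
      by rewrite -[LHS](pM_inv pmS) -E pM_inv.
    by move: bd; rewrite F eqxx.
- by rewrite swp_pM // fsw_b.
Qed.

Lemma improve_good M a : perfect_matching e M -> s (pM M a) != a ->
  e (pM M (s (pM M a))) a -> Good M.
Proof.
move=> pm ca eda; case: (improve pm ca eda) => M2 [p2 t2 h2 g2].
exists M2; split => //; first exact: rt_step.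
by exists (pM M a); rewrite pM_inv // eq_sym ca.
Qed.

Lemma sw_improve_good M a c a' : perfect_matching e M ->
  c != a -> c != pM M a -> e (pM M a) c -> e (pM M c) a ->
  pM M a != s a -> pM M c != s c ->
  s (fsw M a c a') != a' -> e (fsw M a c (s (fsw M a c a'))) a' ->
  pM M (fsw M a c a') != s (fsw M a c a') -> Good M.
Proof.
move=> pm ca cb ebc eda na nc h1 h2 h3.
have pm' := swp_pm pm ca cb ebc eda.
have E := swp_pM pm ca cb ebc eda.
rewrite -!E in h1 h2 h3.
case: (improve pm' h1 h2) => M2 [p2 t2 h4 g2].
exists M2; split => //.
  by apply: rt_trans (rt_step _ _ _ _ (swp_two pm ca cb ebc eda)) (rt_step _ _ _ _ t2).
- move=> v hv; apply: h4; rewrite E.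
  have bd := sw_bd pm ca.
  rewrite fsw_o //; apply/eqP => E'; subst v.
  + by move: na; rewrite hv eqxx.
  + by move: hv; rewrite pM_inv // => F; move: na; rewrite {2}F pM_inv // eqxx.
  + by move: nc; rewrite hv eqxx.
  + by move: hv; rewrite pM_inv // => F; move: nc; rewrite {2}F pM_inv // eqxx.
by exists (pM (swp M a c) a').
Qed.

End Target.


Lemma card_pm M : perfect_matching e M -> #|T| = (#|M|).*2.
Proof.
move=> pm.
have P : partition M [set: T].
  apply/and3P; split.
  - apply/eqP/setP => v; rewrite inE; apply/bigcupP.
    by case: (pm_cover v pm) => S h1 h2; exists S.
  - apply/trivIsetP => A B hA hB nAB; rewrite -setI_eq0; apply/eqP/setP => x.
    rewrite !inE; apply/andP => [[xa xb]].
    by move: nAB; rewrite (pm_uniq pm hA hB xa xb) eqxx.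
  - apply/negP => /(pm_edge pm) [x [y [_ E]]].
    have : x \in (set0 : {set T}) by rewrite E !inE eqxx.
    by rewrite inE.
rewrite -cardsT (card_partition P) -muln2 -sum_nat_const.
apply: eq_bigr => S SM; case: (pm_edge pm SM) => x [y [exy ->]].
rewrite cards2; case: eqP => // xy; by rewrite xy e_irr in exy.
Qed.

Section Forcing.
Variable Ms : {set {set T}}.
Hypothesis pmS : perfect_matching e Ms.
Local Notation s := (pM Ms).

Section Forced.
Variables (u v : T) (M' : {set {set T}}).
Hypothesis vu : v != u.
Hypothesis vsu : v != s u.
Hypothesis H : ~~ ((e u v && e (s u) (s v)) || (e u (s v) && e (s u) v)).
Hypothesis pm' : perfect_matching e M'.
Hypothesis sub : Ms :\ [set u; s u] :\ [set v; s v] \subset M'.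

Lemma forcedK x : pM M' x != u -> pM M' x != s u -> pM M' x != v -> pM M' x != s v ->
  pM M' x = s x.
Proof.
move=> h1 h2 h3 h4; set p := pM M' x.
have inS : [set p; s p] \in Ms :\ [set u; s u] :\ [set v; s v].
  rewrite !inE pM_in // andbT; apply/andP; split; apply/eqP => E.
    have : p \in [set v; s v] by rewrite -E !inE eqxx.
    by rewrite !inE (negbTE h3) (negbTE h4).
  have : p \in [set u; s u] by rewrite -E !inE eqxx.
  by rewrite !inE (negbTE h1) (negbTE h2).
have E := pM_uniq pm' (subsetP sub _ inS).
have F : x = s p by rewrite -E /p pM_inv.
by rewrite [in RHS]F pM_inv.
Qed.

Lemma forced_u : pM M' u = s u.
Proof.
have nu : s u != u by apply: pM_neq.
have nv : s v != v by apply: pM_neq.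
have svu : s v != u by apply/eqP => E; move: vsu; rewrite -E pM_inv // eqxx.
have svsu : s v != s u by apply/eqP => E; move: vu; rewrite -(pM_inv pmS v) E pM_inv // eqxx.
have inv' := pM_inv pm'.
case: (boolP (pM M' u == s u)) => [/eqP //|h2].
case: (boolP (pM M' u == v)) => [/eqP pv|h3].
  case: (boolP (pM M' (s u) == s v)) => [/eqP q|g4].
    have e1 : e u v by rewrite -pv pM_edge.
    have e2 : e (s u) (s v) by rewrite -q pM_edge.
    by move: H; rewrite e1 e2.
  have g1 : pM M' (s u) != u by apply/eqP => E; move/eqP: h2; apply; rewrite -{1}E inv'.
  have g2 : pM M' (s u) != s u by apply: pM_neq.
  have g3 : pM M' (s u) != v.
    apply/eqP => E; have F1 : pM M' v = u by rewrite -pv inv'.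
    have F2 : pM M' v = s u by rewrite -E inv'.
    by move: nu; rewrite -F2 F1 eqxx.
  have := forcedK g1 g2 g3 g4; rewrite pM_inv // => E.
  have F : pM M' u = s u by rewrite -{1}E inv'.
  by move: h2; rewrite F eqxx.
case: (boolP (pM M' u == s v)) => [/eqP pv|h4].
  case: (boolP (pM M' (s u) == v)) => [/eqP q|g3].
    have e1 : e u (s v) by rewrite -pv pM_edge.
    have e2 : e (s u) v by rewrite -q pM_edge.
    by move: H; rewrite e1 e2 orbT.
  have g1 : pM M' (s u) != u by apply/eqP => E; move/eqP: h2; apply; rewrite -{1}E inv'.
  have g2 : pM M' (s u) != s u by apply: pM_neq.
  have g4 : pM M' (s u) != s v.
    apply/eqP => E; have F1 : pM M' (s v) = u by rewrite -pv inv'.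
    have F2 : pM M' (s v) = s u by rewrite -E inv'.
    by move: nu; rewrite -F2 F1 eqxx.
  have := forcedK g1 g2 g3 g4; rewrite pM_inv // => E.
  have F : pM M' u = s u by rewrite -{1}E inv'.
  by move: h2; rewrite F eqxx.
have h1 : pM M' u != u by apply: pM_neq.
exact: forcedK h1 h2 h3 h4.
Qed.

End Forced.

Lemma Pprop n (hT : #|T| = n.*2) (hf : forcing_number e Ms = n.-1) u v :
  v != u -> v != s u -> (e u v && e (s u) (s v)) || (e u (s v) && e (s u) v).
Proof.
move=> vu vsu; apply/idPn => H.
have uv : u != v by rewrite eq_sym.
have usv : u != s v by apply/eqP => E; move: vsu; rewrite E pM_inv // eqxx.
have H' : ~~ ((e v u && e (s v) (s u)) || (e v (s u) && e (s v) u)).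
  by rewrite (e_sym v u) (e_sym (s v) (s u)) (e_sym v (s u)) (e_sym (s v) u) [X in _ || X]andbC.
set S := Ms :\ [set u; s u] :\ [set v; s v].
have fS : forcing_setb e Ms S.
  apply/andP; split.
    by apply/subsetP => x; rewrite !inE => /and3P [_ _ ->].
  apply/forallP => M'; apply/implyP => /andP [pm' sub]; apply/eqP.
  have sub' : Ms :\ [set v; s v] :\ [set u; s u] \subset M'.
    by move: sub; rewrite /S !setDDl setUC.
  have Fu := forced_u vu vsu H pm' sub.
  have Fv := forced_u uv usv H' pm' sub'.
  apply: (pm_eq pm' pmS) => w.
  case: (w =P u) => [->//|wu].
  case: (w =P s u) => [->|wsu].
    by rewrite -{1}Fu !pM_inv.
  case: (w =P v) => [->//|wv].
  case: (w =P s v) => [->|wsv].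
    by rewrite -{1}Fv !pM_inv.
  apply: (pM_uniq pm'); apply: (subsetP sub); rewrite !inE pM_in // andbT.
  apply/andP; split; apply/eqP => E.
    have : w \in [set v; s v] by rewrite -E !inE eqxx.
    by rewrite !inE => /orP [/eqP|/eqP].
  have : w \in [set u; s u] by rewrite -E !inE eqxx.
  by rewrite !inE => /orP [/eqP|/eqP].
have le : forcing_number e Ms <= #|S|.
  apply: (bigmin_le_j (P := fun S => (S \in powerset Ms) && forcing_setb e Ms S)).
  rewrite fS andbT powersetE.
  by apply/subsetP => x; rewrite !inE => /and3P [_ _ ->].
have nMs : #|Ms| = n by apply: double_inj; rewrite -(card_pm pmS).
have cS : #|Ms| = #|S|.+2.
  rewrite (cardsD1 [set u; s u]) pM_in // (cardsD1 [set v; s v]) !inE pM_in // andbT.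
  have -> : [set v; s v] != [set u; s u].
    apply/eqP => E; have : v \in [set u; s u] by rewrite -E !inE eqxx.
    by rewrite !inE (negbTE vu) (negbTE vsu).
  by [].
by move: le; rewrite hf -nMs cS /= ltnn.
Qed.

End Forcing.


Lemma fsw_c M a c : perfect_matching e M -> c != a -> c != pM M a -> fsw M a c c = pM M a.
Proof. by move=> pm h1 h2; rewrite /fsw (negbTE h1) (negbTE h2) eqxx. Qed.
Lemma fsw_d M a c : perfect_matching e M -> pM M c != a -> pM M c != pM M a ->
  fsw M a c (pM M c) = a.
Proof.
by move=> pm h1 h2; rewrite /fsw (negbTE h1) (negbTE h2) (negbTE (pM_neq pm c)) eqxx.
Qed.

Section Main.
Variable Ms : {set {set T}}.
Hypothesis pmS : perfect_matching e Ms.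
Local Notation s := (pM Ms).
Hypothesis PP : forall u v, v != u -> v != s u ->
  (e u v && e (s u) (s v)) || (e u (s v) && e (s u) v).
Variable M : {set {set T}}.
Hypothesis pm : perfect_matching e M.
Local Notation m := (pM M).
Variable y0 : T.

Definition g z := s (m z).
Definition yy i := iter i g y0.
Definition xx i := s (yy i).

Lemma gY i : g (yy i) = yy i.+1. Proof. by []. Qed.
Lemma mY i : m (yy i) = xx i.+1.
Proof. by rewrite /xx /yy iterS -/(yy i) /g pM_inv. Qed.
Lemma mX i : m (xx i.+1) = yy i. Proof. by rewrite -mY pM_inv. Qed.
Lemma sX i : s (xx i) = yy i. Proof. by rewrite /xx pM_inv. Qed.
Lemma yS i : yy i.+1 = s (xx i.+1). Proof. by rewrite sX. Qed.

Lemma parity d : forall i, (yy i != xx (i + d)) && (yy i != xx (i + d.+1)).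
Proof.
elim: d => [|d IH] i.
  rewrite addn0 addn1; apply/andP; split.
    by rewrite /xx eq_sym pM_neq.
  by rewrite -mY eq_sym pM_neq.
apply/andP; split; first by case/andP: (IH i).
apply/eqP => E; case/andP: (IH i.+1) => /eqP H _; apply: H.
rewrite -gY E /g (_ : i + d.+2 = (i.+1 + d).+1); last by rewrite addSn !addnS.
by rewrite mX.
Qed.

Lemma YX j k : yy j != xx k.
Proof.
case: (leqP j k) => [jk|kj].
  by rewrite -(subnKC jk); case/andP: (parity (k - j) j).
apply/eqP => E.
have : yy k = xx j by rewrite -sX -E /xx.
by apply/eqP; rewrite -(subnKC (ltnW kj)); case/andP: (parity (j - k) k).
Qed.

Lemma ginj : injective g.
Proof.
move=> a b; rewrite /g => E.
by rewrite -(pM_inv pm a) -(pM_inv pm b) -(pM_inv pmS (m a)) E pM_inv.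
Qed.

Lemma yinj d j : yy d != yy 0 -> yy (j + d) != yy j.
Proof.
move=> H; elim: j => [|j IH]; first by rewrite add0n.
apply/eqP => E; move/eqP: IH; apply; apply: ginj.
by rewrite !gY -addSn.
Qed.

Lemma xinj d j : yy d != yy 0 -> xx (j + d) != xx j.
Proof.
move=> H; apply/eqP => E; move/eqP: (yinj j H); apply.
by rewrite -sX E sX.
Qed.

Lemma sY i : s (yy i) = xx i. Proof. by []. Qed.
Lemma yy1 : yy 1 = s (m y0). Proof. by []. Qed.
Lemma yy0 : yy 0 = y0. Proof. by []. Qed.
Local Opaque xx yy.

Lemma moveA i : yy i.+1 != yy i -> e (xx i.+2) (yy i) -> Good Ms M.
Proof.
move=> D c1; apply: (improve_good (a := yy i) pmS pm); by rewrite ?mY ?sX ?mY.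
Qed.

Lemma moveB1 i : yy 1 != yy 0 -> yy 2 != yy 0 -> e (yy i) (yy i.+2) ->
  e (xx i.+3) (xx i.+1) -> e (yy i) (yy i.+1) -> Good Ms M.
Proof.
move=> D1 D2 c1 c2 c3.
have d10 := yinj i D1; have d21 := yinj i.+1 D1; have d20 := yinj i D2.
have x32 := xinj i.+2 D1.
rewrite ?addn1 ?addn2 in d10 d21 d20 x32.
have fa : fsw M (xx i.+1) (yy i.+2) (yy i.+1) = xx i.+2.
  rewrite fsw_o.
  - by rewrite mY.
  - exact: YX.
  - by rewrite mX.
  - by rewrite eq_sym.
  - by rewrite mY; exact: YX.
have fc : fsw M (xx i.+1) (yy i.+2) (yy i.+2) = yy i.
  by rewrite fsw_c // ?mX // YX.
apply: (sw_improve_good (a := xx i.+1) (c := yy i.+2) (a' := yy i.+1) pmS pm).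
- exact: YX.
- by rewrite mX.
- by rewrite mX.
- by rewrite mY.
- by rewrite mX sX eq_sym.
- by rewrite mY sY.
- by rewrite fa sX.
- by rewrite fa sX fc.
- by rewrite fa mX sX eq_sym.
Qed.

Lemma moveB2 i : yy 1 != yy 0 -> yy 2 != yy 0 -> e (yy i) (yy i.+2) ->
  e (xx i.+3) (xx i.+1) -> e (xx i.+2) (xx i.+3) -> Good Ms M.
Proof.
move=> D1 D2 c1 c2 c3.
have d10 := yinj i D1; have d21 := yinj i.+1 D1; have d20 := yinj i D2.
have x32 := xinj i.+2 D1; have x31 := xinj i.+1 D2.
rewrite ?addn1 ?addn2 in d10 d21 d20 x32 x31.
have fa : fsw M (xx i.+1) (yy i.+2) (yy i.+1) = xx i.+2.
  rewrite fsw_o.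
  - by rewrite mY.
  - exact: YX.
  - by rewrite mX.
  - by rewrite eq_sym.
  - by rewrite mY; exact: YX.
have fd : fsw M (xx i.+1) (yy i.+2) (xx i.+3) = xx i.+1.
  rewrite -(mY i.+2) fsw_d //.
  - by rewrite mY.
  - by rewrite mY mX eq_sym; exact: YX.
apply: (sw_improve_good (a := xx i.+1) (c := yy i.+2) (a' := xx i.+3) pmS pm).
- exact: YX.
- by rewrite mX.
- by rewrite mX.
- by rewrite mY.
- by rewrite mX sX eq_sym.
- by rewrite mY sY.
- by rewrite fd sX; exact: YX.
- by rewrite fd sX fa.
- by rewrite fd mX sX eq_sym.
Qed.

Lemma moveB3 : yy 1 != yy 0 -> yy 2 != yy 0 -> yy 3 != yy 0 -> e (yy 0) (yy 3) ->
  e (xx 4) (xx 1) -> e (yy 0) (yy 2) -> Good Ms M.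
Proof.
move=> D1 D2 D3 c1 c2 c3.
have d32 := yinj 2 D1; have x43 := xinj 3 D1.
rewrite ?addn1 in d32 x43.
have fa : fsw M (xx 1) (yy 3) (yy 2) = xx 3.
  rewrite fsw_o.
  - by rewrite mY.
  - exact: YX.
  - by rewrite mX.
  - by rewrite eq_sym.
  - by rewrite mY; exact: YX.
have fc : fsw M (xx 1) (yy 3) (yy 3) = yy 0.
  rewrite (fsw_c pm).
  - by rewrite mX.
  - exact: YX.
  - by rewrite mX.
apply: (sw_improve_good (a := xx 1) (c := yy 3) (a' := yy 2) pmS pm).
- exact: YX.
- by rewrite mX.
- by rewrite mX.
- by rewrite mY.
- by rewrite mX sX eq_sym.
- by rewrite mY sY.
- by rewrite fa sX.
- by rewrite fa sX fc.
- by rewrite fa mX sX eq_sym.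
Qed.

Lemma moveC i : yy 1 != yy 0 -> yy 2 != yy 0 -> e (yy i) (xx i.+3) ->
  e (yy i.+2) (xx i.+1) -> Good Ms M.
Proof.
move=> D1 D2 c1 c2.
have d10 := yinj i D1; have d21 := yinj i.+1 D1; have d20 := yinj i D2.
have d32 := yinj i.+2 D1; have x31 := xinj i.+1 D2.
rewrite ?addn1 ?addn2 in d10 d21 d20 d32 x31.
have fd : fsw M (xx i.+1) (xx i.+3) (yy i.+2) = xx i.+1.
  rewrite -(mX i.+2) fsw_d //.
  - by rewrite mX; exact: YX.
  - by rewrite !mX.
have fa : fsw M (xx i.+1) (xx i.+3) (yy i.+1) = xx i.+2.
  rewrite fsw_o.
  - by rewrite mY.
  - exact: YX.
  - by rewrite mX.
  - exact: YX.
  - by rewrite mX eq_sym.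
apply: (sw_improve_good (a := xx i.+1) (c := xx i.+3) (a' := yy i.+2) pmS pm).
- exact: x31.
- by rewrite mX eq_sym; exact: YX.
- by rewrite mX.
- by rewrite mX.
- by rewrite mX sX eq_sym.
- by rewrite mX sX eq_sym.
- by rewrite fd sX eq_sym.
- by rewrite fd sX fa -sY e_sym pM_edge.
- by rewrite fd mX sX eq_sym.
Qed.

Lemma Ppar i j : yy j != yy i -> ~~ e (yy i) (xx j) -> e (yy i) (yy j) && e (xx i) (xx j).
Proof.
move=> h n; have := PP h (YX j i); rewrite !sY.
by case/orP => // /andP [c _]; rewrite c in n.
Qed.

Lemma Pcross i j : yy j != yy i -> ~~ e (yy i) (yy j) -> e (yy i) (xx j) && e (xx i) (yy j).
Proof.
move=> h n; have := PP h (YX j i); rewrite !sY.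
by case/orP => // /andP [c _]; rewrite c in n.
Qed.

Lemma Pcross2 i j : yy j != yy i -> ~~ e (xx i) (xx j) -> e (yy i) (xx j) && e (xx i) (yy j).
Proof.
move=> h n; have := PP h (YX j i); rewrite !sY.
by case/orP => // /andP [_ c]; rewrite c in n.
Qed.

Lemma desc : m y0 != s y0 -> Good Ms M.
Proof.
move=> H0.
have D1 : yy 1 != yy 0.
  rewrite yy1 yy0; apply/eqP => E; move/eqP: H0; apply; by rewrite -{2}E pM_inv.
case: (yy 2 =P yy 0) => [E2|D2'].
  apply: (moveA (i:=0)) => //.
  by rewrite -sY E2 e_sym (pM_edge pmS).
have D2 : yy 2 != yy 0 by apply/eqP.
have d21 : yy 2 != yy 1 := yinj 1 D1.
have d32 : yy 3 != yy 2 := yinj 2 D1.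
have d31 : yy 3 != yy 1 := yinj 1 D2.
have d42 : yy 4 != yy 2 := yinj 2 D2.
case: (boolP (e (xx 2) (yy 0))) => [c|n1]; first by apply: (moveA (i:=0)).
case: (boolP (e (xx 3) (yy 1))) => [c|n2]; first by apply: (moveA (i:=1)).
case/andP: (Ppar D2 ltac:(by rewrite e_sym)) => p02a p02b.
case/andP: (Ppar d31 ltac:(by rewrite e_sym)) => p13a p13b.
case: (boolP (e (yy 0) (yy 1))) => [c|n3].
  by apply: (moveB1 (i:=0)) => //; rewrite e_sym.
case: (boolP (e (xx 2) (xx 3))) => [c|n4].
  by apply: (moveB2 (i:=0)) => //; rewrite e_sym.
case: (boolP (e (xx 4) (yy 2))) => [c|n5]; first by apply: (moveA (i:=2)).
case/andP: (Ppar d42 ltac:(by rewrite e_sym)) => p24a p24b.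
case: (boolP (e (yy 1) (yy 2))) => [c|n6].
  by apply: (moveB1 (i:=1)) => //; rewrite e_sym.
case/andP: (Pcross D1 n3) => c01a c01b.
case/andP: (Pcross d21 n6) => c12a c12b.
case/andP: (Pcross2 d32 n4) => c23a c23b.
have D3 : yy 3 != yy 0.
  apply/eqP => E3; move: n2; by rewrite -sY E3 sY c01b.
case: (boolP (e (yy 0) (xx 3))) => [c|n7].
  by apply: (moveC (i:=0)) => //; rewrite e_sym.
case/andP: (Ppar D3 n7) => p03a p03b.
case: (boolP (e (yy 1) (xx 4))) => [c|n8].
  by apply: (moveC (i:=1)) => //; rewrite e_sym.
have d41 : yy 4 != yy 1 := yinj 1 D3.
case/andP: (Ppar d41 n8) => p14a p14b.
by apply: moveB3 => //; rewrite e_sym.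
Qed.

End Main.


Lemma reach Ms (pmS : perfect_matching e Ms)
  (PP : forall u v, v != u -> v != pM Ms u ->
    (e u v && e (pM Ms u) (pM Ms v)) || (e u (pM Ms v) && e (pM Ms u) v))
  M : perfect_matching e M -> crt M Ms.
Proof.
move=> pmM.
pose mu (N : {set {set T}}) := #|[set v | pM N v != pM Ms v]|.
have [k hk] : exists k, mu M <= k by exists (mu M).
elim: k M pmM hk => [|k IH] M pmM hk;
  case: (pickP (fun v => pM M v != pM Ms v)) => [y0 hy0|none].
- have : y0 \in [set v | pM M v != pM Ms v] by rewrite inE.
  by move: hk; rewrite leqn0 cards_eq0 => /eqP ->; rewrite inE.
- rewrite (pm_eq pmM pmS); first exact: rt_refl.
  by move=> v; apply/eqP; move: (none v) => /negbFE.
- case: (desc pmS PP pmM hy0) => M2 [pm2 r2 pres [t [t1 t2]]].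
  apply: rt_trans r2 (IH M2 pm2 _).
  have lt : mu M2 < mu M.
    apply: proper_card; apply/properP; split.
      apply/subsetP => v; rewrite !inE; apply: contra => /eqP E.
      by apply/eqP; apply: pres.
    by exists t; rewrite !inE ?t1 // t2 eqxx.
  by rewrite -ltnS; apply: leq_trans lt hk.
- rewrite (pm_eq pmM pmS); first exact: rt_refl.
  by move=> v; apply/eqP; move: (none v) => /negbFE.
Qed.

End G.

Unset Implicit Arguments.
Set Strict Implicit.

Theorem mainTheorem11 (n : nat) (T : finType) (e : rel T)
    (e_sym : symmetric e) (e_irr : irreflexive e)
    (hn : 1 <= n) (hT : #|T| = n.*2)
    (Ms : {set {set T}}) (hMs : perfect_matching e Ms)
    (hf : forcing_number e Ms = n.-1) :
  forall M : {set {set T}}, perfect_matching e M ->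
    clos_refl_trans _ (two_switch e) M Ms.
Proof.
move=> M pmM.
apply: (reach e_sym e_irr hMs _ pmM).
move=> u v; exact: (Pprop e_sym e_irr hMs hT hf).
Qed.
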